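(* Let $G$ be a weighted finite graph and let $f_1,\ldots,f_k:V\to\mathbb{R}$ be orthonormal in $l^2(V,\mu)$. Let $F:V\to\mathbb{R}^k$, $F(v)=(f_1(v),\ldots,f_k(v))$. If $S\subseteq V$ satisfies $\mathrm{diam}(S\cap\widetilde{V}_F,\overline{d}_F)\leq r$ for some $0<r<1$, then \[ \mathcal{E}_S\leq\frac{1}{k(1-r^2)}\mathcal{E}_V. \]
   Context: $G=(V,E,w)$ is a finite undirected graph with positive symmetric edge weights, degrees $d_u=\sum_vw_{uv}$, and measure $\mu(u)=d_u$; $l^2(V,\mu)$ has inner product $(f,g)_\mu=\sum_u\mu(u)f(u)g(u)$. For $S\subseteq V$, $\mathcal{E}_S:=\sum_{u\in S}\mu(u)\|F(u)\|^2$ (Euclidean norm). $\widetilde{V}_F:=\{v\in V:F(v)\neq0\}$, and for $u,v\in\widetilde{V}_F$, \[ \overline{d}_F(u,v):=\min\left\{\left\|\tfrac{F(u)}{\|F(u)\|}-\tfrac{F(v)}{\|F(v)\|}\right\|,\left\|\tfrac{F(u)}{\|F(u)\|}+\tfrac{F(v)}{\|F(v)\|}\right\|\right\}, \] a pseudometric on $\widetilde{V}_F$; $\mathrm{diam}$ is the supremum of $\overline{d}_F$ over pairs of points of the set. *)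

(* Defs.v *)
From mathcomp Require Import all_boot all_order all_algebra.
From mathcomp Require Import reals.
Set Implicit Arguments. Unset Strict Implicit. Unset Printing Implicit Defensive.
Import Order.TTheory GRing.Theory Num.Theory.
Local Open Scope ring_scope.

Section Defs.
Variables (R : realType) (V : finType).

(* weighted graph: symmetric nonnegative weights, w u v > 0 iff uv is an edge *)
Definition weighted_graph (w : V -> V -> R) : Prop :=
  (forall u v, w u v = w v u) /\ (forall u v, 0 <= w u v).

Definition deg (w : V -> V -> R) (u : V) : R := \sum_(v : V) w u v.

Definition mu (w : V -> V -> R) (u : V) : R := deg w u.

Definition inner_mu (w : V -> V -> R) (f g : V -> R) : R :=
  \sum_(u : V) mu w u * f u * g u.

Variable k : nat.

Definition Fvec (f : 'I_k -> V -> R) (v : V) : 'I_k -> R := fun i => f i v.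

Definition enorm (x : 'I_k -> R) : R := Num.sqrt (\sum_(i < k) x i ^+ 2).

Definition orthonormal_mu (w : V -> V -> R) (f : 'I_k -> V -> R) : Prop :=
  forall i j : 'I_k, inner_mu w (f i) (f j) = (i == j)%:R.

Definition energy (w : V -> V -> R) (f : 'I_k -> V -> R) (S : {set V}) : R :=
  \sum_(u in S) mu w u * enorm (Fvec f u) ^+ 2.

Definition support_F (f : 'I_k -> V -> R) : {set V} :=
  [set v | [exists i, f i v != 0]].

Definition normalized (f : 'I_k -> V -> R) (u : V) : 'I_k -> R :=
  fun i => f i u / enorm (Fvec f u).

Definition dbar (f : 'I_k -> V -> R) (u v : V) : R :=
  Num.min (enorm (fun i => normalized f u i - normalized f v i))
          (enorm (fun i => normalized f u i + normalized f v i)).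

Definition diam_le (f : 'I_k -> V -> R) (A : {set V}) (r : R) : Prop :=
  forall u v, u \in A -> v \in A -> dbar f u v <= r.

End Defs.

(* Main.v *)
Require Import Defs.
From mathcomp Require Import all_boot all_order all_algebra.
From mathcomp Require Import reals.
From mathcomp Require Import ring lra.
Import Order.TTheory GRing.Theory Num.Theory.
Set Implicit Arguments. Unset Strict Implicit.
Local Open Scope ring_scope.

Lemma enorm_sq (R : realType) k (x : 'I_k -> R) :
  enorm x ^+ 2 = \sum_(i < k) x i ^+ 2.
Proof. by rewrite /enorm sqr_sqrtr // sumr_ge0 // => i _; exact: sqr_ge0. Qed.

Lemma enorm_ge0 (R : realType) k (x : 'I_k -> R) : 0 <= enorm x.
Proof. exact: sqrtr_ge0. Qed.

Lemma supp_pos (R : realType) (V : finType) k (f : 'I_k -> V -> R) u :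
  u \in support_F f -> 0 < enorm (Fvec f u) ^+ 2.
Proof.
rewrite inE => /existsP [i Hi]; rewrite enorm_sq (bigD1 i) //=.
apply: ltr_wpDr; first by apply: sumr_ge0 => j _; exact: sqr_ge0.
by rewrite /Fvec exprn_even_gt0.
Qed.

Lemma nsupp0 (R : realType) (V : finType) k (f : 'I_k -> V -> R) u :
  u \notin support_F f -> enorm (Fvec f u) = 0.
Proof.
rewrite inE negb_exists => /forallP H.
rewrite /enorm big1 ?sqrtr0 // => i _; move: (H i); rewrite negbK /Fvec => /eqP ->.
by rewrite expr0n.
Qed.

Lemma norm_normalized (R : realType) (V : finType) k (f : 'I_k -> V -> R) u :
  u \in support_F f -> \sum_(i < k) normalized f u i ^+ 2 = 1.
Proof.
move=> Hu; have Hp := supp_pos Hu.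
under eq_bigr do rewrite /normalized expr_div_n.
by rewrite -mulr_suml -enorm_sq divff // gt_eqF.
Qed.


Lemma sum_sqB (R : realType) k (x y : 'I_k -> R) :
  \sum_(i < k) (x i - y i) ^+ 2 =
  \sum_(i < k) x i ^+ 2 + \sum_(i < k) y i ^+ 2 - 2 * \sum_(i < k) x i * y i.
Proof.
under eq_bigr do rewrite sqrrB -mulr_natr.
rewrite !big_split /= sumrN -mulr_suml; lra.
Qed.

Lemma sum_sqD (R : realType) k (x y : 'I_k -> R) :
  \sum_(i < k) (x i + y i) ^+ 2 =
  \sum_(i < k) x i ^+ 2 + \sum_(i < k) y i ^+ 2 + 2 * \sum_(i < k) x i * y i.
Proof.
under eq_bigr do rewrite sqrrD -mulr_natr.
rewrite !big_split /= -mulr_suml; lra.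
Qed.

Lemma dot_bound (R : realType) k (x y : 'I_k -> R) r :
  \sum_(i < k) x i ^+ 2 = 1 -> \sum_(i < k) y i ^+ 2 = 1 -> 0 < r -> r < 1 ->
  Num.min (enorm (fun i => x i - y i)) (enorm (fun i => x i + y i)) <= r ->
  1 - r ^+ 2 <= (\sum_(i < k) x i * y i) ^+ 2.
Proof.
move=> Hx Hy r0 r1; rewrite ge_min => /orP [] H.
- have H0 := enorm_ge0 (fun i => x i - y i).
  have : enorm (fun i => x i - y i) ^+ 2 <= r ^+ 2 by nra.
  rewrite enorm_sq sum_sqB Hx Hy; nra.
- have H0 := enorm_ge0 (fun i => x i + y i).
  have : enorm (fun i => x i + y i) ^+ 2 <= r ^+ 2 by nra.
  rewrite enorm_sq sum_sqD Hx Hy; nra.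
Qed.

Lemma quad_sum (R : realType) (V : finType) (w : V -> V -> R) k
  (f : 'I_k -> V -> R) (x : 'I_k -> R) :
  orthonormal_mu w f ->
  \sum_(v : V) mu w v * (\sum_(i < k) x i * f i v) ^+ 2 = \sum_(i < k) x i ^+ 2.
Proof.
move=> Ho.
have E : forall v, mu w v * (\sum_(i < k) x i * f i v) ^+ 2 =
  \sum_(i < k) \sum_(j < k) x i * x j * (mu w v * f i v * f j v).
  move=> v; move: (mu w v) => m; rewrite expr2 mulr_suml mulr_sumr; apply: eq_bigr => i _.
  rewrite mulr_sumr mulr_sumr; apply: eq_bigr => j _; ring.
under eq_bigr do rewrite E.
rewrite exchange_big /=; apply: eq_bigr => i _.
rewrite exchange_big /=.
under eq_bigr do rewrite -mulr_sumr.
rewrite (bigD1 i) //=; move: (Ho i i); rewrite /inner_mu => ->.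
rewrite eqxx mulr1 big1 ?addr0 ?expr2 //.
move=> j /negbTE Hj; move: (Ho i j); rewrite /inner_mu => ->.
by rewrite eq_sym Hj mulr0.
Qed.

Lemma pointwise (R : realType) (V : finType) k (f : 'I_k -> V -> R) u v r :
  u \in support_F f -> v \in support_F f -> 0 < r -> r < 1 -> dbar f u v <= r ->
  (1 - r ^+ 2) * enorm (Fvec f v) ^+ 2 <=
  (\sum_(i < k) normalized f u i * f i v) ^+ 2.
Proof.
move=> Hu Hv r0 r1 H.
have Hd := dot_bound (norm_normalized Hu) (norm_normalized Hv) r0 r1 H.
have Hp := supp_pos Hv.
have Hn : enorm (Fvec f v) != 0.
  by move: Hp; rewrite lt0r expf_eq0 /= => /andP [].
have -> : \sum_(i < k) normalized f u i * f i v =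
  enorm (Fvec f v) * \sum_(i < k) normalized f u i * normalized f v i.
  rewrite mulr_sumr; apply: eq_bigr => i _.
  by rewrite [normalized f v i]/normalized mulrCA [X in _ = _ * X]mulrC divfK.
rewrite exprMn mulrC; apply: ler_wpM2l => //; exact: sqr_ge0.
Qed.

Theorem lemma5p2 (R : realType) (V : finType) (w : V -> V -> R) (k : nat)
  (f : 'I_k -> V -> R) (S : {set V}) (r : R) :
  weighted_graph w ->
  orthonormal_mu w f ->
  0 < r -> r < 1 ->
  diam_le f (S :&: support_F f) r ->
  energy w f S <= (k%:R * (1 - r ^+ 2))^-1 * energy w f setT.
Proof.
move=> [_ Hw] Ho r0 r1 Hd.
have mu0 : forall v, 0 <= mu w v by move=> v; apply: sumr_ge0 => j _.
have EV : energy w f setT = k%:R.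
  rewrite /energy (eq_bigl xpredT); last by move=> v; rewrite in_setT.
  under eq_bigr do rewrite enorm_sq mulr_sumr.
  rewrite exchange_big /=.
  have -> : k%:R = \sum_(i < k) (1 : R) by rewrite sumr_const card_ord.
  apply: eq_bigr => i _; move: (Ho i i); rewrite eqxx /= /inner_mu => H; apply: eq_trans _ H.
  by apply: eq_bigr => v _; rewrite /Fvec expr2 mulrA.
rewrite EV.
have r2 : 0 < 1 - r ^+ 2 by nra.
case: (boolP (S :&: support_F f == set0)) => [/eqP H0 | /set0Pn [u Hu]].
  rewrite /energy big1; first by rewrite mulr_ge0 // invr_ge0 mulr_ge0 // ltW.
  move=> v Hv; rewrite nsupp0 ?expr0n ?mulr0 //.
  apply/negP => Hs; have : v \in S :&: support_F f by rewrite inE Hv Hs.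
  by rewrite H0 inE.
have Hus : u \in support_F f by move: Hu; rewrite inE => /andP [].
have kpos : (0 < k)%N.
  by move: Hus; rewrite inE => /existsP [i _]; apply: (leq_ltn_trans _ (ltn_ord i)).
have -> : (k%:R * (1 - r ^+ 2))^-1 * k%:R = (1 - r ^+ 2)^-1.
  by field; rewrite ?pnatr_eq0 -?lt0n ?kpos ?gt_eqF.
rewrite -[X in _ <= X]mulr1 ler_pdivlMl //.
have H1 := etrans (quad_sum (normalized f u) Ho) (norm_normalized Hus).
rewrite -[X in _ <= X]H1.
rewrite /energy mulr_sumr [X in _ <= X](bigID (mem S)) /=.
apply: ler_wpDr; first by apply: sumr_ge0 => v _; rewrite mulr_ge0 // sqr_ge0.
apply: ler_sum => v Hv.
case: (boolP (v \in support_F f)) => Hvs.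
  have Hvv : v \in S :&: support_F f by rewrite inE Hv Hvs.
  have := pointwise Hus Hvs r0 r1 (Hd u v Hu Hvv).
  by move=> Hpw; rewrite mulrCA; apply: ler_wpM2l.
by rewrite nsupp0 // expr0n /= !mulr0 mulr_ge0 // sqr_ge0.
Qed.
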